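(* Let $r_0,r_1,r_2\ge 1$ and $L=\mathfrak{g}(r_0,r_1,r_2)$. Then $$b(L)=\begin{cases} r_1(r_0+r_2-r_1) & \text{if } r_1<r_0 \text{ and } r_1<r_2,\\ r_0r_2 & \text{if } r_1\ge r_0 \text{ or } r_1\ge r_2.\end{cases}$$
   Context: All Lie algebras are over an algebraically closed field $\mathbf{k}$ of characteristic zero. $\mathcal{P}(r_0,r_1,r_2)$ is the poset on $\{b_1,\dots,b_{r_0},m_1,\dots,m_{r_1},t_1,\dots,t_{r_2}\}$ whose strict relations are exactly $b_i\prec m_j$, $m_j\prec t_k$ and $b_i\prec t_k$ for all $i,j,k$. $\mathfrak{g}(r_0,r_1,r_2)$ denotes the nilpotent Lie poset algebra $\mathfrak{g}^{\prec}(\mathcal{P}(r_0,r_1,r_2))$: the Lie algebra under the commutator bracket spanned by matrix units $E_{p,q}$ with $p\prec q$. The breadth of a Lie algebra $L$ is $b(L)=\max_{x\in L}\operatorname{rank}(\mathrm{ad}_x)$, where $\mathrm{ad}_x=[x,-]$. *)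

(* Defs.v *)
From HB Require Import structures.
From mathcomp Require Import all_boot all_order all_algebra.
Set Implicit Arguments. Unset Strict Implicit. Unset Printing Implicit Defensive.
Import GRing.Theory.
Local Open Scope ring_scope.

(* Elements of P(r0,r1,r2) are encoded as indices 'I_(r0+r1+r2):
   indices < r0 are b_1..b_r0 (level 0), indices in [r0, r0+r1) are
   m_1..m_r1 (level 1), the remaining r2 indices are t_1..t_r2 (level 2). *)
Definition plevel (r0 r1 r2 : nat) (i : 'I_(r0 + r1 + r2)) : nat :=
  if (i < r0)%N then 0%N else if (i < r0 + r1)%N then 1%N else 2%N.

Definition pprec (r0 r1 r2 : nat) (p q : 'I_(r0 + r1 + r2)) : bool :=
  (plevel p < plevel q)%N.

Definition gpos (F : fieldType) (r0 r1 r2 : nat) : {vspace 'M[F]_(r0 + r1 + r2)} :=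
  <<[seq delta_mx pq.1 pq.2 | pq <- enum [pred pq : 'I_(r0+r1+r2) * 'I_(r0+r1+r2)
                                            | pprec pq.1 pq.2]]>>%VS.

Definition lbr (F : fieldType) (n : nat) (x y : 'M[F]_n) : 'M[F]_n :=
  x *m y - y *m x.

Definition ad_rank (F : fieldType) (n : nat) (L : {vspace 'M[F]_n}) (x : 'M[F]_n) : nat :=
  \dim (linfun (lbr x) @: L)%VS.

Definition is_breadth (F : fieldType) (n : nat) (L : {vspace 'M[F]_n}) (b : nat) : Prop :=
  (exists2 x, x \in L & ad_rank L x = b) /\ (forall x, x \in L -> (ad_rank L x <= b)%N).

(* Main.v *)
Require Import Defs.
From HB Require Import structures.
From mathcomp Require Import all_boot all_order all_algebra.
From mathcomp Require Import zify ring lra.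
Set Implicit Arguments. Unset Strict Implicit. Unset Printing Implicit Defensive.
Import GRing.Theory.
Local Open Scope ring_scope.

Section G.
Variable F : fieldType.
Variables r0 r1 r2 : nat.
Local Notation n := (r0 + r1 + r2)%N.
Local Notation L := (gpos F r0 r1 r2).

Definition ib (i : 'I_r0) : 'I_n := lshift r2 (lshift r1 i).
Definition im (j : 'I_r1) : 'I_n := lshift r2 (rshift r0 j).
Definition it (k : 'I_r2) : 'I_n := rshift (r0 + r1) k.

Lemma idx_cases (P : 'I_n -> Prop) :
  (forall i, P (ib i)) -> (forall j, P (im j)) -> (forall k, P (it k)) -> forall p, P p.
Proof.
move=> Hb Hm Ht p; rewrite -(splitK p); case: (split p) => [q|k]; last exact: Ht.
rewrite -(splitK q); case: (split q) => [i|j]; [exact: Hb|exact: Hm].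
Qed.

Lemma plev_b i : plevel (ib i) = 0%N.
Proof. by rewrite /plevel /= ltn_ord. Qed.
Lemma plev_m j : plevel (im j) = 1%N.
Proof. by rewrite /plevel /= ltnNge leq_addr /= ltn_add2l ltn_ord. Qed.
Lemma plev_t k : plevel (it k) = 2%N.
Proof. by rewrite /plevel /= !ltnNge -addnA !leq_addr /= addnA leq_addr. Qed.

Definition offp (M : 'M[F]_n) : 'M[F]_n :=
  \matrix_(a, b) (if pprec a b then 0 else M a b).
Fact offp_is_semilinear : semilinear offp.
Proof.
split=> [c A|A B]; apply/matrixP=> a b; rewrite !mxE; case: ifP => //;
  by rewrite ?mulr0 ?addr0.
Qed.
HB.instance Definition _ := GRing.isSemilinear.Build F _ _ _ offp offp_is_semilinear.

Lemma gposP (x : 'M[F]_n) :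
  reflect (forall p q, ~~ pprec p q -> x p q = 0) (x \in L).
Proof.
apply: (iffP idP).
- move=> xL p q npq.
  have : x \in lker (linfun offp).
    suff /subvP: (L <= lker (linfun offp))%VS by apply.
    apply/span_subvP => M /mapP [[a b]].
    rewrite mem_enum /= => ab ->; rewrite memv_ker lfunE /=; apply/eqP/matrixP=> c d.
    rewrite !mxE; case: ifP => // cd; case: (c =P a) => // ca; case: (d =P b) => // db.
    by move: cd ab; rewrite ca db inE /= => ->.
  rewrite memv_ker lfunE /= => /eqP/matrixP/(_ p q); rewrite !mxE (negbTE npq) => ->.
  by [].
- move=> H; rewrite [x]matrix_sum_delta; apply: memv_suml => a _; apply: memv_suml => b _.
  case: (boolP (pprec a b)) => ab; last by rewrite H // scale0r mem0v.
  apply: memvZ; apply: memv_span; apply/mapP; exists (a, b) => //.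
  by rewrite mem_enum.
Qed.

Lemma plev_le2 (p : 'I_n) : (plevel p <= 2)%N.
Proof. by rewrite /plevel; case: ifP => // _; case: ifP. Qed.

Lemma gposE (x : 'M[F]_n) p q : x \in L -> x p q != 0 -> pprec p q.
Proof. by move/gposP=> H; apply: contraTT => /H ->; rewrite eqxx. Qed.

Lemma mul0 (x y : 'M[F]_n) p q : x \in L -> y \in L ->
  ~~ ((plevel p == 0%N) && (plevel q == 2%N)) -> (x *m y) p q = 0.
Proof.
move=> xL yL H; rewrite mxE big1 // => s _.
have [xz|xnz] := eqVneq (x p s) 0; first by rewrite xz mul0r.
have [yz|ynz] := eqVneq (y s q) 0; first by rewrite yz mulr0.
have := gposE xL xnz; have := gposE yL ynz; rewrite /pprec.
have := plev_le2 q; move: H; case/nandP => /eqP; lia.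
Qed.

Lemma mul_split (x y : 'M[F]_n) p q : (x *m y) p q =
  \sum_i x p (ib i) * y (ib i) q + \sum_j x p (im j) * y (im j) q
  + \sum_k x p (it k) * y (it k) q.
Proof. by rewrite mxE !big_split_ord. Qed.

Definition Ab (x : 'M[F]_n) : 'M[F]_(r0, r1) := \matrix_(i, j) x (ib i) (im j).
Definition Bb (x : 'M[F]_n) : 'M[F]_(r1, r2) := \matrix_(j, k) x (im j) (it k).
Definition Cbk (x : 'M[F]_n) : 'M[F]_(r0, r2) := \matrix_(i, k) x (ib i) (it k).
Fact Cbk_is_semilinear : semilinear Cbk.
Proof. by split=> [c A|A B]; apply/matrixP=> a b; rewrite !mxE. Qed.
HB.instance Definition _ := GRing.isSemilinear.Build F _ _ _ Cbk Cbk_is_semilinear.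

Fact lbr_is_semilinear (x : 'M[F]_n) : semilinear (lbr x).
Proof.
split=> [c A|A B]; rewrite /lbr.
  by rewrite -scalemxAr -scalemxAl scalerBr.
by rewrite mulmxDr mulmxDl opprD addrACA.
Qed.
HB.instance Definition _ (x : 'M[F]_n) :=
  GRing.isSemilinear.Build F _ _ _ (lbr x) (lbr_is_semilinear x).

Lemma mul_bt (x y : 'M[F]_n) i k : x \in L -> y \in L ->
  (x *m y) (ib i) (it k) = \sum_j x (ib i) (im j) * y (im j) (it k).
Proof.
move=> xL yL; rewrite mul_split big1 ?add0r; last first.
  move=> i' _; have [z|nz] := eqVneq (x (ib i) (ib i')) 0; first by rewrite z mul0r.
  by move: (gposE xL nz); rewrite /pprec !plev_b.
rewrite [X in _ + X]big1 ?addr0 // => k' _.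
have [z|nz] := eqVneq (y (it k') (it k)) 0; first by rewrite z mulr0.
by move: (gposE yL nz); rewrite /pprec !plev_t.
Qed.

Lemma Cbk_lbr (x y : 'M[F]_n) : x \in L -> y \in L ->
  Cbk (lbr x y) = Ab x *m Bb y - Ab y *m Bb x.
Proof.
move=> xL yL; apply/matrixP => i k; rewrite /lbr !mxE.
move: (mul_bt i k xL yL) (mul_bt i k yL xL); rewrite !mxE => -> ->.
by congr (_ - _); apply: eq_bigr => j _; rewrite !mxE.
Qed.

Lemma lbr_inj (x y : 'M[F]_n) : x \in L -> y \in L ->
  Cbk (lbr x y) = 0 -> lbr x y = 0.
Proof.
move=> xL yL /matrixP C; apply/matrixP => p q.
have [H|H] := boolP ((plevel p == 0%N) && (plevel q == 2%N)); last first.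
  have -> : lbr x y p q = (x *m y) p q - (y *m x) p q by rewrite !mxE.
  by rewrite !mul0 // subrr mxE.
move: H; move: p q; apply: idx_cases => [i|j|k] q; rewrite ?plev_m ?plev_t //.
move: q; apply: idx_cases => [i'|j|k]; rewrite ?plev_b ?plev_m //.
by move=> _; have := C i k; rewrite !mxE.
Qed.
Definition hfun k l (U : 'M[F]_(k, r0)) (V : 'M[F]_(r2, l)) (N : 'M[F]_(r0, r2)) :=
  U *m N *m V.
Fact hfun_is_semilinear k l U V : semilinear (@hfun k l U V).
Proof.
split=> [c A|A B]; rewrite /hfun; first by rewrite -scalemxAr -scalemxAl.
by rewrite mulmxDr mulmxDl.
Qed.
HB.instance Definition _ k l U V :=
  GRing.isSemilinear.Build F _ _ _ (@hfun k l U V) (hfun_is_semilinear U V).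

Lemma upper (x : 'M[F]_n) : x \in L ->
  (ad_rank L x <= r0 * r2 - (r0 - r1) * (r2 - r1))%N.
Proof.
move=> xL; rewrite /ad_rank.
set W := (linfun (lbr x) @: L)%VS.
pose A := Ab x; pose B := Bb x.
pose U := row_base (kermx A); pose U2 := row_base (kermx B^T); pose V := U2^T.
have UA : U *m A = 0.
  have /submxP [D ->] : (U <= kermx A)%MS by rewrite eq_row_base.
  by rewrite -mulmxA mulmx_ker mulmx0.
have BV : B *m V = 0.
  have /submxP [D DU] : (U2 <= kermx B^T)%MS by rewrite eq_row_base.
  apply: trmx_inj; rewrite trmx_mul trmxK DU -mulmxA mulmx_ker mulmx0.
  by apply/matrixP => a b; rewrite !mxE.
have /row_freeP [U' UU'] := row_base_free (kermx A).
have /row_freeP [V0 VV0] := row_base_free (kermx B^T).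
pose h := linfun (hfun U V).
have dimW : \dim W = \dim (linfun Cbk @: W).
  symmetry; apply: limg_dim_eq; apply/eqP; rewrite -subv0; apply/subvP => M.
  rewrite memv_cap => /andP [/memv_imgP [y yL ->]]; rewrite memv_ker !lfunE /=.
  by move=> /eqP/(lbr_inj xL yL) ->; rewrite mem0v.
have sub : (linfun Cbk @: W <= lker h)%VS.
  apply/subvP => N /memv_imgP [M /memv_imgP [y yL ->] ->].
  rewrite memv_ker.
rewrite /h !lfunE /= Cbk_lbr // /hfun.
  rewrite mulmxBr mulmxBl !mulmxA UA mul0mx mul0mx sub0r -!mulmxA BV !mulmx0.
  by rewrite oppr0.
have surj : (fullv <= h @: fullv)%VS.
  apply/subvP => T _; apply/memv_imgP; exists (U' *m T *m V0^T); first exact: memvf.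
  rewrite /h lfunE /= /hfun !mulmxA UU' mul1mx -mulmxA.
  have -> : V0^T *m V = 1%:M by rewrite /V -trmx_mul VV0 trmx1.
  by rewrite mulmx1.
have dk := limg_ker_dim h fullv; rewrite capfv in dk.
have dl := dimvS surj; have d2 := dimvS sub.
move: dk dl; rewrite !dimvf.
rewrite !dim_matrix.
have rA := rank_leq_col A; have rB := rank_leq_row B.
have kA := mxrank_ker A; have kB := mxrank_ker B^T; rewrite mxrank_tr in kB.
rewrite dimW; move: d2.
set a := \rank (kermx A); set b := \rank (kermx B^T).
set dk := \dim (lker h); set di := \dim _; set dC := \dim (linfun Cbk @: W).
move=> d2 e1 e2.
have : ((r0 - r1) * (r2 - r1) <= a * b)%N by apply: leq_mul; lia.
nia.
Qed.
Definition xc (p q : nat) : bool :=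
  (((p < r0) && (p < r1) && (q == p + r0)) || ((r0 <= p) && (p < r0 + r1) && (q == p + r1)))%N.
Definition x0 : 'M[F]_n := \matrix_(p, q) (xc p q)%:R.

Lemma natb0 (b : bool) : b = false -> b%:R = 0 :> F.
Proof. by move=> ->. Qed.

Lemma x0L : x0 \in L.
Proof.
apply/gposP => p q; rewrite mxE /xc /pprec /plevel.
have := ltn_ord q; have := ltn_ord p.
by do ![case: ifP]; move=> *; apply: natb0; lia.
Qed.

Lemma mul_delta_r m (M : 'M[F]_(m, n)) (a b : 'I_n) p (q : 'I_n) :
  (M *m delta_mx a b) p q = if q == b then M p a else 0.
Proof.
rewrite mxE (bigD1 a) //= big1 ?addr0; last first.
  by move=> s /negbTE sa; rewrite mxE sa /= mulr0.
by rewrite mxE eqxx /=; case: (q == b); rewrite ?mulr1 ?mulr0.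
Qed.

Lemma mul_delta_l m (M : 'M[F]_(n, m)) (a b : 'I_n) (p : 'I_n) q :
  (delta_mx a b *m M) p q = if p == a then M b q else 0.
Proof.
rewrite mxE (bigD1 b) //= big1 ?addr0; last first.
  by move=> s /negbTE sb; rewrite mxE sb andbF mul0r.
by rewrite mxE eqxx andbT; case: (p == a); rewrite ?mul1r ?mul0r.
Qed.

Lemma natbB (b1 b2 b3 : bool) : ~~ b2 -> (b1 -> b3) -> (b3 -> b1) ->
  b1%:R - b2%:R = b3%:R :> F.
Proof.
move/negbTE=> ->; case: b1; case: b3 => H1 H2; rewrite /= ?mulr0n ?subr0 //.
- by have := H1 isT.
- by have := H2 isT.
Qed.
Lemma natbB1 (b1 b3 : bool) : (b1 -> b3) -> (b3 -> b1) -> b1%:R - 0 = b3%:R :> F.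
Proof.
case: b1; case: b3 => H1 H2; rewrite /= ?mulr0n ?subr0 //.
- by have := H1 isT.
- by have := H2 isT.
Qed.
Lemma natbB2 (b2 b3 : bool) : ~~ b2 -> ~~ b3 -> 0 - b2%:R = b3%:R :> F.
Proof. by move/negbTE=> -> /negbTE ->; rewrite subr0. Qed.
Lemma natbB3 (b3 : bool) : ~~ b3 -> 0 - 0 = b3%:R :> F.
Proof. by move/negbTE=> ->; rewrite subr0. Qed.

Lemma lbr_m (i : 'I_r0) (j : 'I_r1) (k : 'I_r2) : i = j :> nat ->
  lbr x0 (delta_mx (im j) (it k)) = delta_mx (ib i) (it k).
Proof.
move=> ij; apply/matrixP => p q; rewrite /lbr.
set D := delta_mx _ _.
have -> : (x0 *m D - D *m x0) p q = (x0 *m D) p q - (D *m x0) p q by rewrite !mxE.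
rewrite mul_delta_r mul_delta_l !mxE /xc -!val_eqE /= -ij.
have := ltn_ord i; have := ltn_ord j; have := ltn_ord k; have := ltn_ord p.
move=> *; case: ifP => hq; case: ifP => hp;
  [apply: natbB|apply: natbB1|apply: natbB2|apply: natbB3]; lia.
Qed.

Lemma lbr_b (i : 'I_r0) (j : 'I_r1) (k : 'I_r2) : j = k :> nat ->
  lbr x0 (delta_mx (ib i) (im j)) = - delta_mx (ib i) (it k).
Proof.
move=> jk; rewrite /lbr -opprB; congr (- _).
apply/matrixP => p q; set D := delta_mx _ _.
have -> : (D *m x0 - x0 *m D) p q = (D *m x0) p q - (x0 *m D) p q by rewrite !mxE.
rewrite mul_delta_r mul_delta_l !mxE /xc -!val_eqE /= jk.
have := ltn_ord i; have := ltn_ord j; have := ltn_ord k; have := ltn_ord p.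
move=> *; case: ifP => hq; case: ifP => hp;
  [apply: natbB|apply: natbB1|apply: natbB2|apply: natbB3]; lia.
Qed.

Lemma delta_L a b : pprec a b -> delta_mx a b \in L.
Proof. by move=> ab; apply: memv_span; apply/mapP; exists (a, b); rewrite ?mem_enum. Qed.

Lemma Cbk_delta i k : Cbk (delta_mx (ib i) (it k)) = delta_mx i k.
Proof. by apply/matrixP => a b; rewrite !mxE -!val_eqE /= eqn_add2l. Qed.

Lemma ofb_proof (i : 'I_(r0 - r1)) : (i + r1 < r0)%N.
Proof. by have := ltn_ord i; lia. Qed.
Lemma oft_proof (k : 'I_(r2 - r1)) : (k + r1 < r2)%N.
Proof. by have := ltn_ord k; lia. Qed.
Definition Dm (N : 'M[F]_(r0, r2)) : 'M[F]_(r0 - r1, r2 - r1) :=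
  \matrix_(i, k) N (Ordinal (ofb_proof i)) (Ordinal (oft_proof k)).
Fact Dm_is_semilinear : semilinear Dm.
Proof. by split=> [c A|A B]; apply/matrixP=> a b; rewrite !mxE. Qed.
HB.instance Definition _ := GRing.isSemilinear.Build F _ _ _ Dm Dm_is_semilinear.

Lemma lower : (r0 * r2 - (r0 - r1) * (r2 - r1) <= ad_rank L x0)%N.
Proof.
rewrite /ad_rank; set W := (linfun (lbr x0) @: L)%VS.
have memW (i : 'I_r0) (k : 'I_r2) : (i < r1)%N || (k < r1)%N -> delta_mx (ib i) (it k) \in W.
  case/orP => [hi|hk].
    rewrite -(@lbr_m i (Ordinal hi) k erefl).
    have := memv_img (linfun (lbr x0)) (delta_L (a := im (Ordinal hi)) (b := it k) _).
    by rewrite lfunE; apply; rewrite /pprec plev_m plev_t.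
  rewrite -[delta_mx _ _]opprK -(@lbr_b i (Ordinal hk) k erefl) memvN.
  have := memv_img (linfun (lbr x0)) (delta_L (a := ib i) (b := im (Ordinal hk)) _).
  by rewrite lfunE; apply; rewrite /pprec plev_m plev_b.
have sub : (lker (linfun Dm) <= linfun Cbk @: W)%VS.
  apply/subvP => N; rewrite memv_ker lfunE /= => /eqP DN.
  rewrite [N]matrix_sum_delta; apply: memv_suml => i _; apply: memv_suml => k _.
  have [H|H] := boolP ((i < r1)%N || (k < r1)%N).
    by apply: memvZ; rewrite -Cbk_delta; have := memv_img (linfun Cbk) (memW i k H); rewrite lfunE.
  have h1 : (i - r1 < r0 - r1)%N by have := ltn_ord i; lia.
  have h2 : (k - r1 < r2 - r1)%N by have := ltn_ord k; lia.
  have := congr1 (fun M : 'M[F]_(r0 - r1, r2 - r1) => M (Ordinal h1) (Ordinal h2)) DN; rewrite !mxE /=.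
  have -> : Ordinal (ofb_proof (Ordinal h1)) = i by apply: val_inj => /=; lia.
  have -> : Ordinal (oft_proof (Ordinal h2)) = k by apply: val_inj => /=; lia.
  by move=> ->; rewrite scale0r mem0v.
have d1 := limg_ker_dim (linfun Cbk) W.
have d2 := limg_ker_dim (linfun Dm) fullv; rewrite capfv in d2.
have d3 := dimvS sub.
have d4 := dimvS (subvf (linfun Dm @: fullv)).
move: d2 d4; rewrite !dimvf !dim_matrix; lia.
Qed.

End G.

Lemma tgtE (r0 r1 r2 : nat) :
  (if (r1 < r0)%N && (r1 < r2)%N then (r1 * (r0 + r2 - r1))%N else (r0 * r2)%N)
  = (r0 * r2 - (r0 - r1) * (r2 - r1))%N.
Proof.
case: ifP => [/andP [a b]|].
  have [c ->] : exists c, r0 = (r1 + c)%N by exists (r0 - r1)%N; lia.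
  have [d ->] : exists d, r2 = (r1 + d)%N by exists (r2 - r1)%N; lia.
  rewrite !addKn; nia.
move/negbT; rewrite negb_and -!leqNgt => /orP [h|h].
  by rewrite (_ : (r0 - r1 = 0)%N) ?mul0n ?subn0 //; lia.
by rewrite (_ : (r2 - r1 = 0)%N) ?muln0 ?subn0 //; lia.
Qed.

Theorem theorem6 (F : closedFieldType) (charF0 : [pchar F] =i pred0)
  (r0 r1 r2 : nat) (h0 : (0 < r0)%N) (h1 : (0 < r1)%N) (h2 : (0 < r2)%N) :
  is_breadth (gpos F r0 r1 r2)
    (if (r1 < r0)%N && (r1 < r2)%N then (r1 * (r0 + r2 - r1))%N else (r0 * r2)%N).
Proof.
rewrite tgtE; split.
  exists (x0 F r0 r1 r2); first exact: x0L.
  by apply/eqP; rewrite eqn_leq upper ?x0L // lower.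
by move=> x xL; apply: upper.
Qed.
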